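(* Let $Q$ be a non-trivial quotient of the identity functor on the category of abelian groups. Then the essential image of $Q$ contains either a non-trivial finite cyclic group, or all free abelian groups $\mathbb{Z}^{\oplus X}$ ($X$ any set).
   Context: A quotient of the identity functor on abelian groups is a functor $Q$ with a natural transformation $q:\mathrm{Id}\to Q$ such that each $q_A:A\to Q(A)$ is surjective. It is non-trivial if $Q(A)\neq 0$ for some $A$. The essential image of $Q$ is the class of groups isomorphic to $Q(A)$ for some abelian group $A$. *)

(* Defs.v *)
From HB Require Import structures.
From mathcomp Require Import all_boot all_order all_algebra.
From mathcomp Require Import boolp.
From mathcomp Require Import freeg.
Set Implicit Arguments. Unset Strict Implicit. Unset Printing Implicit Defensive.
Import GRing.Theory.
Local Open Scope ring_scope.

(* An endofunctor of the category of abelian groups. Preservation of identities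
   and composition is stated extensionally (for any additive map that is
   pointwise the identity / the composite). *)
Record AbFunctor := {
  Fobj :> zmodType -> zmodType;
  Fmap : forall (A B : zmodType), {additive A -> B} -> {additive Fobj A -> Fobj B};
  Fmap_id : forall (A : zmodType) (f : {additive A -> A}),
      (forall x, f x = x) -> forall y, Fmap f y = y;
  Fmap_comp : forall (A B C : zmodType) (f : {additive A -> B})
      (g : {additive B -> C}) (h : {additive A -> C}),
      (forall x, h x = g (f x)) -> forall y, Fmap h y = Fmap g (Fmap f y)
}.

Record IdQuotient := {
  QF :> AbFunctor;
  qnat : forall A : zmodType, {additive A -> QF A};
  qnat_natural : forall (A B : zmodType) (f : {additive A -> B}) (x : A),
      Fmap QF f (qnat A x) = qnat B (f x);
  qnat_surj : forall (A : zmodType) (y : QF A), exists x : A, qnat A x = y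
}.

Definition nontrivial_quotient (Q : IdQuotient) : Prop :=
  exists (A : zmodType) (y : Q A), y <> 0.

Definition ab_iso (A B : zmodType) : Prop :=
  exists f : {additive A -> B}, bijective f.

Definition in_ess_image (Q : IdQuotient) (G : zmodType) : Prop :=
  exists A : zmodType, ab_iso (Q A) G.

(* The free abelian group Z^(X) on an arbitrary set (type) X;
   {classic X} equips X with a (classical) choice structure. *)
Definition free_ab (X : Type) : zmodType := {freeg {classic X} / int}.

(* Main.v *)
Require Import Defs.
From mathcomp Require Import all_boot all_order all_algebra.
From mathcomp Require Import boolp freeg.
From HB Require Import structures.
From mathcomp Require Import zify.
Import GRing.Theory.
Local Open Scope ring_scope.

Lemma iso_of_bij (A B : zmodType) (g : {additive A -> B}) :
  injective g -> (forall y, exists x, g x = y) -> ab_iso B A.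
Proof.
move=> ginj gsurj.
have [h hK] := choice gsurj.
have hM : GRing.zmod_morphism h.
  by move=> x y; apply: ginj; rewrite raddfB !hK.
pose hA : {additive B -> A} := HB.pack h (GRing.isZmodMorphism.Build B A h hM).
exists hA; exists g => x /=; first exact: hK.
by apply: ginj; rewrite hK.
Qed.

Theorem theorem3p19 (Q : IdQuotient) :
  nontrivial_quotient Q ->
  (exists n : nat, (1 < n)%N /\ in_ess_image Q ('Z_n : zmodType))
  \/ (forall X : Type, in_ess_image Q (free_ab X)).
Proof.
move=> [A0 [y0 y0n0]].
pose q := qnat Q int.
case: (pselect (exists x : int, x != 0 /\ q x = 0)) => [[x [xn0 qx0]] | nok].
- left.
  have ex : exists k, (0 < k)%N && (q k%:Z == 0).
    move: xn0 qx0; case: x => m xn0 qx0.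
      by exists m; rewrite qx0 eqxx andbT lt0n; apply: contra xn0 => /eqP ->.
    exists m.+1; apply/andP; split => //.
    by rewrite -[Posz m.+1]opprK -NegzE raddfN qx0 oppr0.
  case: (ex_minnP ex) => n /andP[n0 /eqP qn] nmin.
  have qmul m : q (Posz (m * n)) = 0.
    by rewrite mulnC PoszM -[Posz m]natz mulr_natr raddfMn qn mul0rn.
  have qmod a : q (Posz a) = q (Posz (a %% n)).
    by rewrite {1}(divn_eq a n) PoszD raddfD qmul add0r.
  have n1 : n != 1%N.
    apply/eqP => n1; apply: y0n0.
    have [a <-] := qnat_surj y0.
    have fM : GRing.zmod_morphism (fun k : int => a *~ k).
      by move=> u v; rewrite mulrzBr.
    pose f : {additive int -> A0} := HB.pack (fun k : int => a *~ k)
       (GRing.isZmodMorphism.Build int A0 _ fM).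
    have q1 : q 1 = 0 by move: qn; rewrite n1.
    have := @qnat_natural Q _ _ f 1.
    rewrite -/q q1 raddf0 /= => <-.
    by [].
  case: n n0 n1 qn nmin qmul qmod => [|[|n']] //= _ _ qn nmin qmul qmod.
  exists n'.+2; split => //.
  exists int.
  have gM : GRing.zmod_morphism (fun z : 'Z_(n'.+2) => q (Posz (val z))).
    have gD (z1 z2 : 'Z_(n'.+2)) : q (Posz (val (z1 + z2))) = q (Posz (val z1)) + q (Posz (val z2)).
      by rewrite -raddfD -PoszD [RHS]qmod.
    move=> z1 z2; apply/eqP; rewrite eq_sym subr_eq -gD.
    by rewrite subrK.
  pose g : {additive 'Z_(n'.+2) -> Q int} := HB.pack (fun z : 'Z_(n'.+2) => q (Posz (val z)))
       (GRing.isZmodMorphism.Build _ _ _ gM).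
  apply: (@iso_of_bij _ _ g).
  + have key (z1 z2 : 'Z_(n'.+2)) : (val z1 <= val z2)%N -> g z1 = g z2 -> z1 = z2.
      move=> le12 e; apply: val_inj => /=.
      have qd : q (Posz (val z2 - val z1)) = 0.
        move: e => /= /eqP; rewrite eq_sym -subr_eq0 => /eqP.
        by rewrite -raddfB subzn.
      case: (posnP (val z2 - val z1)) => [d0|dpos].
        by apply/eqP; rewrite eqn_leq le12 -subn_eq0 d0.
      have := nmin (val z2 - val z1)%N; rewrite dpos qd eqxx => /(_ isT).
      have := ltn_ord z2; move=> lt2 le; exfalso.
      have : (val z2 - val z1 < n'.+2)%N by apply: leq_ltn_trans (leq_subr _ _) lt2.
      by rewrite ltnNge le.
    move=> z1 z2 e; case: (leqP (val z1) (val z2)) => le.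
      exact: key.
    by apply/esym/key; [exact: ltnW|].
  + move=> y.
    have [x1 <-] := qnat_surj y.
    have [a qa] : exists a : nat, q (Posz a) = q x1.
      case: x1 => m; first by exists m.
      exists (m.+1 * n'.+2 - m.+1)%N.
      have le : (m.+1 <= m.+1 * n'.+2)%N by rewrite leq_pmulr.
      have -> : Posz (m.+1 * n'.+2 - m.+1) = Posz (m.+1 * n'.+2) + Negz m.
        by rewrite NegzE -(subnK le) PoszD addrK subnK.
      by rewrite raddfD qmul add0r.
    exists (inZp a); rewrite /= -qa.
    by rewrite [RHS]qmod.
- right => X.
  have qinj x : q x = 0 -> x = 0.
    move=> qx; case: (x =P 0) => // /eqP xn0; exfalso.
    by apply: nok; exists x.
  exists (free_ab X); apply: (@iso_of_bij _ _ (qnat Q (free_ab X))).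
  + move=> u1 u2 e; apply/eqP/freeg_eqP => k.
    have := @qnat_natural Q _ _ (coeff k : {additive free_ab X -> int}) (u1 - u2).
    rewrite raddfB e subrr raddf0 => /esym/qinj.
    by move/eqP; rewrite raddfB subr_eq0 => /eqP.
  + by move=> y; apply: qnat_surj.
Qed.
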